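(* Let $W=x_1^{a_1}+\dots+x_N^{a_N}$ with all $a_i\ge3$, and let $X$ be a correlator of type $X_{-1}$ (in the A- or B-model). Then there is a unique $j\in\{1,\dots,N\}$ such that $K_j=1$ and $\ell_j\ge2$, while $K_i=\ell_i=0$ for all $i\ne j$. Furthermore $X=\langle x_j,x_j,x_j^{a_j-2}\alpha,x_j^{a_j-2}\beta\rangle$ for some monomials $\alpha,\beta$ not involving $x_j$.
   Context: A genus-zero correlator (Saito–Givental B-model of $W^T$, or FJRW A-model of $(W,G_W)$ with insertions mapped by Krawitz's isomorphism $\Psi$) is of type $X_{-1}$ if it has at least four insertions and has the form $\langle x_N,\dots,x_N,\dots,x_1,\dots,x_1,\alpha,\beta\rangle$ with $x_i$ appearing $\ell_i\ge0$ times and $\alpha=\prod x_i^{m_i},\beta=\prod x_i^{n_i}$ monomials in the standard basis of $\mathrm{Jac}(W^T)$, and if, setting $b=E_W^{-1}(\ell+m+n+2\cdot\mathbf 1)$ and $K_i=\ell_i-b_i+1$, one has $K_i\in\mathbb Z$ for all $i$ and $\sum_iK_i=1$. For the Fermat sum $W=W^T$, the standard basis consists of $\prod x_i^{r_i}$ with $0\le r_i\le a_i-2$, and $b_i=(\ell_i+m_i+n_i+2)/a_i$. *)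

(* Defs.v *)
From HB Require Import structures.
From mathcomp Require Import all_boot all_order all_algebra.
Set Implicit Arguments. Unset Strict Implicit. Unset Printing Implicit Defensive.
Import Order.TTheory GRing.Theory Num.Theory.
Local Open Scope ring_scope.

(* Fermat sum W = x_1^{a_1} + ... + x_N^{a_N}, indices 'I_N, exponents a : 'I_N -> nat.
   A monomial prod_i x_i^{r_i} is its exponent vector r : 'I_N -> nat.
   It lies in the standard basis of Jac(W^T) = Jac(W) iff 0 <= r_i <= a_i - 2. *)
Definition in_std_basis (N : nat) (a : 'I_N -> nat) (r : 'I_N -> nat) : Prop :=
  forall i, (r i <= a i - 2)%N.

(* A genus-zero correlator <x_N,..,x_N,...,x_1,..,x_1, alpha, beta>,
   with x_i appearing l_i times, alpha = prod x_i^{m_i}, beta = prod x_i^{n_i},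
   is encoded by the triple (l, m, n). *)
Record correlator (N : nat) := Correlator {
  ell : 'I_N -> nat;
  alpha : 'I_N -> nat;
  beta : 'I_N -> nat }.

(* b_i = (l_i + m_i + n_i + 2) / a_i   (E_W is diagonal with entries a_i for Fermat W) *)
Definition bcoef (N : nat) (a : 'I_N -> nat) (X : correlator N) (i : 'I_N) : rat :=
  (ell X i + alpha X i + beta X i + 2)%:R / (a i)%:R.

Definition Kcoef (N : nat) (a : 'I_N -> nat) (X : correlator N) (i : 'I_N) : rat :=
  (ell X i)%:R - bcoef a X i + 1.

Definition n_insertions (N : nat) (X : correlator N) : nat :=
  (\sum_(i < N) ell X i + 2)%N.

Definition type_Xm1 (N : nat) (a : 'I_N -> nat) (X : correlator N) : Prop :=
  [/\ (4 <= n_insertions X)%N,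
      in_std_basis a (alpha X),
      in_std_basis a (beta X),
      (forall i, Kcoef a X i \is a Num.int) &
      \sum_(i < N) Kcoef a X i = 1].

(* Main.v *)
Require Import Defs.
From HB Require Import structures.
From mathcomp Require Import all_boot all_order all_algebra zify ring.
Import Order.TTheory GRing.Theory Num.Theory.
Local Open Scope ring_scope.

Lemma ptw (a l m n : nat) (k : int) :
  (3 <= a)%N -> (m <= a - 2)%N -> (n <= a - 2)%N ->
  (l%:R - (l + m + n + 2)%:R / a%:R + 1 : rat) = k%:~R ->
  (k * a%:Z = (l * a + a)%:Z - (l + m + n + 2)%:Z)%R.
Proof.
move=> ha hm hn hK.
apply: (@intr_inj rat).
have a0 : (a%:R : rat) != 0 by rewrite pnatr_eq0; lia.
rewrite rmorphM rmorphB /= -!pmulrn -hK !natrD !natrM.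
field; exact a0.
Qed.

Lemma ptw2 (a l m n : nat) (k : int) :
  (3 <= a)%N -> (m <= a - 2)%N -> (n <= a - 2)%N ->
  (k * a%:Z = (l * a + a)%:Z - (l + m + n + 2)%:Z)%R ->
  (0 <= k)%R /\ ((k = 0)%R -> l = 0%N) /\ ((k = 1)%R -> (l <= 2)%N /\ (l = 2 -> m = a - 2 /\ n = a - 2)%N).
Proof.
move=> ha hm hn e.
have h0 : (0 <= k)%R by nia.
split=> //; split=> hk; subst k; nia.
Qed.

Lemma ptw3 (N : nat) (a : 'I_N -> nat) (X : correlator N) (i : 'I_N) :
  (3 <= a i)%N -> in_std_basis a (alpha X) -> in_std_basis a (beta X) ->
  Kcoef a X i \is a Num.int ->
  [/\ 0 <= Kcoef a X i, (Kcoef a X i = 0 -> ell X i = 0%N),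
      (Kcoef a X i = 1 -> (ell X i <= 2)%N /\ (ell X i = 2 -> alpha X i = a i - 2 /\ beta X i = a i - 2)%N) &
      (Kcoef a X i <= 1 -> Kcoef a X i = 0 \/ Kcoef a X i = 1)].
Proof.
move=> ha hA hB /intrP [k hk].
have e := ptw _ _ _ _ _ ha (hA i) (hB i) hk.
have [h0 [h1 h2]] := ptw2 _ _ _ _ _ ha (hA i) (hB i) e.
rewrite /Kcoef /bcoef in hk *; rewrite hk.
split.
- by rewrite ler0z.
- by move=> h; apply: h1; apply: (@intr_inj rat); rewrite h.
- by move=> h; apply: h2; apply: (@intr_inj rat); rewrite h.
- change (1 : rat) with ((1 : int)%:~R : rat); rewrite ler_int => h; have : (k = 0 \/ k = 1)%R by lia.
  by case=> ->; [left|right].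
Qed.

Theorem lemma4p6 (N : nat) (a : 'I_N -> nat) (X : correlator N) :
  (forall i, (3 <= a i)%N) ->
  type_Xm1 a X ->
  exists j : 'I_N,
    [/\ (* j is the unique index with K_j = 1, l_j >= 2, and K_i = l_i = 0 for i <> j *)
        [/\ Kcoef a X j = 1, (2 <= ell X j)%N &
            forall i, i != j -> Kcoef a X i = 0 /\ ell X i = 0%N],
        (forall j' : 'I_N,
           [/\ Kcoef a X j' = 1, (2 <= ell X j')%N &
               forall i, i != j' -> Kcoef a X i = 0 /\ ell X i = 0%N] -> j' = j) &
        (* X = <x_j, x_j, x_j^{a_j-2} alpha', x_j^{a_j-2} beta'> with alpha', beta'
           monomials not involving x_j *)
        exists alpha' beta' : 'I_N -> nat,
          [/\ alpha' j = 0%N, beta' j = 0%N,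
              forall i, ell X i = (if i == j then 2 else 0)%N,
              forall i, alpha X i = (if i == j then a j - 2 else alpha' i)%N &
              forall i, beta X i = (if i == j then a j - 2 else beta' i)%N]].
Proof.
move=> ha [hins hA hB hint hsum].
have P i := @ptw3 N a X i (ha i) hA hB (hint i).
have K0 i : 0 <= Kcoef a X i by case: (P i).
have Kle1 i : Kcoef a X i <= 1.
  by rewrite -hsum (bigD1 i) //= lerDl sumr_ge0.
case: (pickP (fun i => Kcoef a X i != 0)) => [j hj | h]; last first.
  move: hsum; rewrite big1 => [/eqP|i _]; first by rewrite eq_sym oner_eq0.
  by move: (h i) => /negbFE/eqP.
have Kj : Kcoef a X j = 1.
  by case: (P j) => _ _ _ /(_ (Kle1 j)) [h|//]; rewrite h eqxx in hj.
have Koth i : i != j -> Kcoef a X i = 0.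
  move=> hij.
  have : \sum_(i0 < N | i0 != j) Kcoef a X i0 = 0.
    by move: hsum; rewrite (bigD1 j) //= Kj => /eqP; rewrite -{2}[1]addr0 (inj_eq (addrI _)) => /eqP.
  move/psumr_eq0P => H; apply: H => //.
have Loth i : i != j -> ell X i = 0%N by move=> hij; case: (P i) => _ H _ _; apply: H; apply: Koth.
have Lj : ell X j = 2%N.
  case: (P j) => _ _ /(_ Kj) [H _] _.
  move: hins; rewrite /n_insertions (bigD1 j) //= big1 => [|i hi]; last by apply: Loth.
  rewrite addn0; lia.
exists j; split.
- split=> //; first by rewrite Lj.
  by move=> i hi; split; [apply: Koth | apply: Loth].
- move=> j' [Kj' _ H]; apply/eqP; apply/negP => /negP hne.
  have := (H j); rewrite eq_sym => /(_ hne) [h _].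
  by move: h; rewrite Kj => /eqP; rewrite oner_eq0.
- case: (P j) => _ _ /(_ Kj) [_ /(_ Lj) [HA HB]] _.
  exists (fun i => if i == j then 0%N else alpha X i), (fun i => if i == j then 0%N else beta X i).
  split; rewrite ?eqxx // => i; case: eqP => [->|/eqP hi] //.
  by apply: Loth.
Qed.
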